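(* Let $\mathcal G$ be a topological $2$-group and $X$ a topological space. Let $c$ be a $\mathcal G$-valued Čech cocycle subordinate to an open cover $\mathcal U$ of $X$ and let $d$ be a $\mathcal G$-valued Čech cocycle subordinate to a refinement $\mathcal V$ of $\mathcal U$. Then any $\mathcal G$-bundle morphism $\pi_d\to\pi_c$ decomposes as a composition $\pi_d\to\pi_{c_{|\mathcal V}}\to\pi_c$ of $\mathcal G$-bundle morphisms, where $c_{|\mathcal V}$ is a restriction of $c$ to $\mathcal V$.
   Context: Topological $2$-group $\mathcal G=(\mathcal G_1\rightrightarrows\mathcal G_0)$, $\mathcal E=\mathrm{Ker}(s)$, ${}^xe=1_xe1_{x^{-1}}$. A $\mathcal G$-valued Čech cocycle subordinate to $\mathcal U=\{U_i\}_{i\in I}$ is $c=(\mathbf x,\mathbf e)$ with continuous $\mathbf x_{ij}\colon U_i\cap U_j\to\mathcal G_0$, $\mathbf e_{ijk}\colon U_i\cap U_j\cap U_k\to\mathcal E$, satisfying $t(\mathbf e_{ijk})\mathbf x_{ij}\mathbf x_{jk}=\mathbf x_{ik}$ and $\mathbf e_{ikl}\mathbf e_{ijk}=\mathbf e_{ijl}\,{}^{\mathbf x_{ij}}\mathbf e_{jkl}$. For $\mathcal V=\{V_a\}_{a\in A}$ and a refinement map $\alpha\colon A\to I$ ($V_a\subset U_{\alpha(a)}$), $c_{|\mathcal V,\alpha}$ has components $\mathbf x_{\alpha(a)\alpha(b)}$, $\mathbf e_{\alpha(a)\alpha(b)\alpha(c)}$ restricted. $\pi_c\colon P_c\to\overline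 X$ denotes the principal $\mathcal G$-bundle with objects $(u,x)_i\in\coprod_iU_i\times\mathcal G_0$, morphisms $(v,g)_{ij}\in\coprod_{i,j}(U_i\cap U_j)\times\mathcal G_1$, $s((v,g)_{ij})=(v,s(g))_i$, $t((v,g)_{ij})=(v,\mathbf x_{ij}(v)^{-1}t(g))_j$, $(v,g)_{ij}*(v,h)_{jk}=(v,\mathbf e_{ijk}(v)(g*(1_{\mathbf x_{ij}(v)}h)))_{ik}$ ($g*h=h1_{t(g)^{-1}}g$), right $\mathcal G$-action by right multiplication, projection to $X$. A $\mathcal G$-bundle morphism $\pi\to\pi'$ is a $\mathcal G$-equivariant continuous functor $f$ with $\pi'f=\pi$. *)

(* Defs.v *)
From HB Require Import structures.
From mathcomp Require Import all_boot all_order all_algebra.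
From mathcomp Require Import all_classical all_reals topology.
Set Implicit Arguments. Unset Strict Implicit. Unset Printing Implicit Defensive.
Local Open Scope classical_set_scope.

Record topGroup := TopGroup {
  tg_car :> topologicalType;
  tg_one : tg_car;
  tg_mul : tg_car -> tg_car -> tg_car;
  tg_inv : tg_car -> tg_car;
  tg_mulA : forall x y z, tg_mul x (tg_mul y z) = tg_mul (tg_mul x y) z;
  tg_mul1g : forall x, tg_mul tg_one x = x;
  tg_mulg1 : forall x, tg_mul x tg_one = x;
  tg_mulVg : forall x, tg_mul (tg_inv x) x = tg_one;
  tg_mulgV : forall x, tg_mul x (tg_inv x) = tg_one;
  tg_mul_cont : continuous (fun p : tg_car * tg_car => tg_mul p.1 p.2);
  tg_inv_cont : continuous tg_inv }.

Arguments tg_one {_}.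
Arguments tg_mul {_}.
Arguments tg_inv {_}.

(** ** Topological (strict) 2-groups: group objects in topological categories.
    [comp g h] is the categorical composite "g then h" (defined when
    [tgt g = src h]); [unit x] is the identity arrow 1_x. *)
Record twoGroup := TwoGroup {
  G0 : topGroup;
  G1 : topGroup;
  src : G1 -> G0;
  tgt : G1 -> G0;
  unit : G0 -> G1;
  comp : G1 -> G1 -> G1;
  src_mul : forall g h, src (tg_mul g h) = tg_mul (src g) (src h);
  tgt_mul : forall g h, tgt (tg_mul g h) = tg_mul (tgt g) (tgt h);
  unit_mul : forall x y, unit (tg_mul x y) = tg_mul (unit x) (unit y);
  src_cont : continuous src;
  tgt_cont : continuous tgt;
  unit_cont : continuous unit;
  comp_cont : {within [set p : G1 * G1 | tgt p.1 = src p.2],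
                 continuous (fun p : G1 * G1 => comp p.1 p.2)};
  src_unit : forall x, src (unit x) = x;
  tgt_unit : forall x, tgt (unit x) = x;
  src_comp : forall g h, tgt g = src h -> src (comp g h) = src g;
  tgt_comp : forall g h, tgt g = src h -> tgt (comp g h) = tgt h;
  compA : forall g h k, tgt g = src h -> tgt h = src k ->
            comp (comp g h) k = comp g (comp h k);
  comp_unitl : forall g, comp (unit (src g)) g = g;
  comp_unitr : forall g, comp g (unit (tgt g)) = g;
  comp_mul : forall g h g' h', tgt g = src h -> tgt g' = src h' ->
      comp (tg_mul g g') (tg_mul h h') = tg_mul (comp g h) (comp g' h') }.

Arguments src {_}.
Arguments tgt {_}.
Arguments unit {_}.
Arguments comp {_}.

Section Defs.
Variables (G : twoGroup) (X : topologicalType).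

Definition conj2 (x : G0 G) (e : G1 G) : G1 G :=
  tg_mul (tg_mul (unit x) e) (unit (tg_inv x)).

Definition open_cover (I : Type) (U : I -> set X) : Prop :=
  (forall i, open (U i)) /\ (forall v : X, exists i, U i v).

Definition refines (I A : Type) (V : A -> set X) (U : I -> set X) : Prop :=
  forall a, exists i, V a `<=` U i.

(** G-valued Cech cocycle (x, e) subordinate to U; the components are total
    functions on X, only their values on the relevant intersections matter. *)
Definition cocycle (I : Type) (U : I -> set X)
    (x : I -> I -> X -> G0 G) (e : I -> I -> I -> X -> G1 G) : Prop :=
  [/\ (forall i j, {within U i `&` U j, continuous (x i j)}),
      (forall i j k, {within U i `&` U j `&` U k, continuous (e i j k)}),
      (forall i j k v, (U i `&` U j `&` U k) v -> src (e i j k v) = tg_one),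
      (forall i j k v, (U i `&` U j `&` U k) v ->
          tg_mul (tg_mul (tgt (e i j k v)) (x i j v)) (x j k v) = x i k v) &
      (forall i j k l v, (U i `&` U j `&` U k `&` U l) v ->
          tg_mul (e i k l v) (e i j k v)
          = tg_mul (e i j l v) (conj2 (x i j v) (e j k l v)))].

Definition restr_x (I A : Type) (alpha : A -> I) (x : I -> I -> X -> G0 G)
  : A -> A -> X -> G0 G := fun a b => x (alpha a) (alpha b).
Definition restr_e (I A : Type) (alpha : A -> I) (e : I -> I -> I -> X -> G1 G)
  : A -> A -> A -> X -> G1 G := fun a b c => e (alpha a) (alpha b) (alpha c).

(** The disjoint unions
    coprod_i U_i x G0 and coprod_{i,j} (U_i cap U_j) x G1 are realised as
    subspaces of (I discrete) x X x G0 and (I discrete) x (I discrete) x X x G1.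
    An object ((i,u),x) is (u,x)_i; a morphism (((i,j),v),g) is (v,g)_{ij}. *)
Definition Obj (I : choiceType) : topologicalType :=
  (discrete_topology I * X * G0 G)%type.
Definition Mor (I : choiceType) : topologicalType :=
  (discrete_topology I * discrete_topology I * X * G1 G)%type.

Section Bundle.
Variables (I : choiceType) (U : I -> set X)
          (x : I -> I -> X -> G0 G) (e : I -> I -> I -> X -> G1 G).

Definition obj_set : set (Obj I) := [set o | U o.1.1 o.1.2].
Definition mor_set : set (Mor I) :=
  [set m | U m.1.1.1 m.1.2 /\ U m.1.1.2 m.1.2].

Definition bsrc (m : Mor I) : Obj I :=
  let: (((i, j), v), g) := m in ((i, v), src g).
Definition btgt (m : Mor I) : Obj I :=
  let: (((i, j), v), g) := m in ((j, v), tg_mul (tg_inv (x i j v)) (tgt g)).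
Definition bcomp (m m' : Mor I) : Mor I :=
  let: (((i, j), v), g) := m in
  let: (((_, k), _), h) := m' in
  (((i, k), v), tg_mul (e i j k v) (comp g (tg_mul (unit (x i j v)) h))).

Definition bact_obj (o : Obj I) (y : G0 G) : Obj I := (o.1, tg_mul o.2 y).
Definition bact_mor (m : Mor I) (h : G1 G) : Mor I := (m.1, tg_mul m.2 h).

Definition bproj_obj (o : Obj I) : X := o.1.2.
Definition bproj_mor (m : Mor I) : X := m.1.2.

Definition is_identity (m : Mor I) : Prop :=
  [/\ mor_set m, btgt m = bsrc m,
      (forall m', mor_set m' -> bsrc m' = btgt m -> bcomp m m' = m') &
      (forall m', mor_set m' -> btgt m' = bsrc m -> bcomp m' m = m')].
End Bundle.

Definition bundle_morphism (A I : choiceType)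
    (V : A -> set X) (xd : A -> A -> X -> G0 G) (ed : A -> A -> A -> X -> G1 G)
    (U : I -> set X) (xc : I -> I -> X -> G0 G) (ec : I -> I -> I -> X -> G1 G)
    (F0 : Obj A -> Obj I) (F1 : Mor A -> Mor I) : Prop :=
     (forall o, obj_set V o -> obj_set U (F0 o))
  /\ (forall m, mor_set V m -> mor_set U (F1 m))
  /\ {within obj_set V, continuous F0}
  /\ {within mor_set V, continuous F1}
  /\ (forall m, mor_set V m ->
         bsrc (F1 m) = F0 (bsrc m) /\ btgt xc (F1 m) = F0 (btgt xd m))
  /\ (forall m m', mor_set V m -> mor_set V m' -> btgt xd m = bsrc m' ->
         F1 (bcomp xd ed m m') = bcomp xc ec (F1 m) (F1 m'))
  /\ (forall m, is_identity V xd ed m -> is_identity U xc ec (F1 m))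
  /\ (forall o y, obj_set V o -> F0 (bact_obj o y) = bact_obj (F0 o) y)
  /\ (forall m h, mor_set V m -> F1 (bact_mor m h) = bact_mor (F1 m) h)
  /\ (forall o, obj_set V o -> bproj_obj (F0 o) = bproj_obj o)
  /\ (forall m, mor_set V m -> bproj_mor (F1 m) = bproj_mor m).

End Defs.

(* Main.v *)
Require Import Defs.
From HB Require Import structures.
From mathcomp Require Import all_boot all_order all_algebra.
From mathcomp Require Import all_classical all_reals topology.
Local Open Scope classical_set_scope.
Declare Scope tg_scope.
Delimit Scope tg_scope with tg.
Local Notation "x * y" := (tg_mul x y) : tg_scope.
Local Notation "x ^-1" := (tg_inv x) : tg_scope.
Local Notation "\1" := tg_one : tg_scope.
Local Open Scope tg_scope.

Section GroupLemmas.
Context {T : topGroup}.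
Implicit Types x y z : T.
Lemma mulA x y z : x * (y * z) = x * y * z. Proof. exact: tg_mulA. Qed.
Lemma mul1g x : \1 * x = x. Proof. exact: tg_mul1g. Qed.
Lemma mulg1 x : x * \1 = x. Proof. exact: tg_mulg1. Qed.
Lemma mulVg x : x^-1 * x = \1. Proof. exact: tg_mulVg. Qed.
Lemma mulgV x : x * x^-1 = \1. Proof. exact: tg_mulgV. Qed.
Lemma mulKg x y : x^-1 * (x * y) = y. Proof. by rewrite mulA mulVg mul1g. Qed.
Lemma mulKVg x y : x * (x^-1 * y) = y. Proof. by rewrite mulA mulgV mul1g. Qed.
Lemma mulgK x y : x * y * y^-1 = x. Proof. by rewrite -mulA mulgV mulg1. Qed.
Lemma mulgKV x y : x * y^-1 * y = x. Proof. by rewrite -mulA mulVg mulg1. Qed.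
Lemma cancl x y z : x * y = x * z -> y = z.
Proof. by move=> h; rewrite -(mulKg x y) h mulKg. Qed.
Lemma cancr x y z : y * x = z * x -> y = z.
Proof. by move=> h; rewrite -(mulgK y x) h mulgK. Qed.
Lemma inv_uniq x y : x * y = \1 -> y = x^-1.
Proof. by move=> h; apply: (@cancl x); rewrite h mulgV. Qed.
Lemma invgK x : x^-1^-1 = x.
Proof. by apply: (@cancl (tg_inv x)); rewrite mulgV mulVg. Qed.
Lemma invMg x y : (x * y)^-1 = y^-1 * x^-1.
Proof. by symmetry; apply: inv_uniq; rewrite -mulA mulKVg mulgV. Qed.
Lemma inv1 : (\1 : T)^-1 = \1.
Proof. by symmetry; apply: inv_uniq; rewrite mulg1. Qed.
Lemma eq_mulVl x y z : x * y = z -> y = x^-1 * z.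
Proof. by move=> <-; rewrite mulKg. Qed.
Lemma eq_mulVr x y z : x * y = z -> x = z * y^-1.
Proof. by move=> <-; rewrite mulgK. Qed.
End GroupLemmas.

Section Hom.
Variables (T T' : topGroup) (f : T -> T').
Hypothesis fM : forall x y, f (x * y) = f x * f y.
Lemma hom1 : f \1 = \1.
Proof. by apply: (@cancl _ (f \1)); rewrite -fM !mulg1. Qed.
Lemma homV x : f x^-1 = (f x)^-1.
Proof. by apply: inv_uniq; rewrite -fM mulgV hom1. Qed.
End Hom.

Section TwoGroupAlg.
Variable G : twoGroup.
Implicit Types (g h : G1 G) (x y : G0 G).

Lemma src1 : src (\1 : G1 G) = \1. Proof. exact: (@hom1 _ _ _ (@src_mul G)). Qed.
Lemma tgt1 : tgt (\1 : G1 G) = \1. Proof. exact: (@hom1 _ _ _ (@tgt_mul G)). Qed.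
Lemma unit1 : unit (\1 : G0 G) = \1. Proof. exact: (@hom1 _ _ _ (@unit_mul G)). Qed.
Lemma srcV g : src g^-1 = (src g)^-1. Proof. exact: (@homV _ _ _ (@src_mul G)). Qed.
Lemma tgtV g : tgt g^-1 = (tgt g)^-1. Proof. exact: (@homV _ _ _ (@tgt_mul G)). Qed.
Lemma unitV x : unit x^-1 = (unit x)^-1. Proof. exact: (@homV _ _ _ (@unit_mul G)). Qed.
Definition srcM := @src_mul G.
Definition tgtM := @tgt_mul G.
Definition unitM := @unit_mul G.

Lemma comp_formula g h : tgt g = src h ->
  Defs.comp g h = g * ((unit (tgt g))^-1 * h).
Proof.
move=> gh.
have hE : h = unit (tgt g) * ((unit (tgt g))^-1 * h) by rewrite mulKVg.
have s1 : src ((unit (tgt g))^-1 * h) = \1.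
  by rewrite srcM srcV src_unit gh mulVg.
rewrite {1}hE -{1}(mulg1 g) comp_mul; last by rewrite tgt1 s1.
  by rewrite comp_unitr -unit1 -s1 comp_unitl.
by rewrite src_unit.
Qed.

Lemma commute_st (e f : G1 G) : src e = \1 -> tgt f = \1 -> e * f = f * e.
Proof.
move=> se tf.
have c1 : Defs.comp (\1 * f) (e * \1) = e * f.
  rewrite comp_mul ?tgt1 ?src1 //.
  by rewrite -unit1 -{1}se comp_unitl -tf comp_unitr.
have c2 : Defs.comp (f * \1) (\1 * e) = f * e.
  rewrite comp_mul ?tgt1 ?src1 //.
  by rewrite -unit1 -{1}tf comp_unitr -se comp_unitl.
by rewrite -c1 -c2 mul1g mulg1 mul1g mulg1.
Qed.

Lemma conj_self (e : G1 G) : src e = \1 -> unit (tgt e) * e * (unit (tgt e))^-1 = e.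
Proof.
move=> se.
have t1 : tgt ((unit (tgt e))^-1 * e) = \1 by rewrite tgtM tgtV tgt_unit mulVg.
have := commute_st e _ se t1.
rewrite !mulA => /cancr h.
by rewrite -mulA h mulKVg.
Qed.


Section PointCocycle.
Variables (J : Type) (ok : J -> Prop) (x : J -> J -> G0 G) (e : J -> J -> J -> G1 G).
Hypothesis Hs : forall i j k, ok i -> ok j -> ok k -> src (e i j k) = \1.
Hypothesis Ht : forall i j k, ok i -> ok j -> ok k ->
  tgt (e i j k) * x i j * x j k = x i k.
Hypothesis Hc : forall i j k l, ok i -> ok j -> ok k -> ok l ->
  e i k l * e i j k = e i j l * conj2 (x i j) (e j k l).

Lemma tgtE i j k : ok i -> ok j -> ok k ->
  tgt (e i j k) = x i k * (x j k)^-1 * (x i j)^-1.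
Proof. by move=> oi oj ok'; rewrite -(Ht _ _ _ oi oj ok') !mulgK. Qed.

Lemma conj2E x0 (f : G1 G) : conj2 x0 f = unit x0 * f * (unit x0)^-1.
Proof. by rewrite /conj2 unitV. Qed.

Lemma ejjk j k : ok j -> ok k -> e j j k = e j j j.
Proof.
move=> oj ok'.
have h := Hc _ _ _ _ oj oj oj ok'.
move/cancl: h; rewrite conj2E => h.
have tE : tgt (e j j j) = (x j j)^-1.
  by rewrite tgtE // mulgV mul1g.
have := conj_self _ (Hs _ _ _ oj oj oj); rewrite tE unitV invgK => h2.
have h' : e j j k = (unit (x j j))^-1 * e j j j * unit (x j j).
  by rewrite h !mulA mulVg mul1g mulgKV.
by rewrite h' h2.
Qed.

Lemma ekjj k j : ok j -> ok k -> e k j j = unit (x k j) * e j j j * (unit (x k j))^-1.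
Proof.
move=> oj ok'.
have h := Hc _ _ _ _ ok' oj oj oj.
by move/cancl: h; rewrite conj2E.
Qed.

Lemma ident_left j (g : G1 G) k (h : G1 G) : ok j -> ok k ->
  (x j j)^-1 * tgt g = src g ->
  e j j j * Defs.comp g (unit (x j j) * g) = g ->
  src h = (x j j)^-1 * tgt g ->
  e j j k * Defs.comp g (unit (x j j) * h) = h.
Proof.
move=> oj ok' tg idem sh.
have cp : forall h', src h' = (x j j)^-1 * tgt g ->
    Defs.comp g (unit (x j j) * h') = g * ((unit (tgt g))^-1 * (unit (x j j) * h')).
  by move=> h' sh'; rewrite comp_formula // srcM src_unit sh' mulKVg.
have Z : e j j j * (g * ((unit (tgt g))^-1 * unit (x j j))) = \1.
  move: idem; rewrite cp; last by rewrite tg.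
  move=> idem; apply: (@cancr _ g); rewrite mul1g -[RHS]idem.
  by rewrite !mulA.
rewrite ejjk // cp //.
transitivity (e j j j * (g * ((unit (tgt g))^-1 * unit (x j j))) * h).
  by rewrite !mulA.
by rewrite Z mul1g.
Qed.

Lemma idemZ j (g : G1 G) : ok j ->
  (x j j)^-1 * tgt g = src g ->
  e j j j * Defs.comp g (unit (x j j) * g) = g ->
  e j j j * g = unit (src g).
Proof.
move=> oj tg idem.
rewrite comp_formula in idem; last by rewrite srcM src_unit -tg mulKVg.
have Z : e j j j * (g * ((unit (tgt g))^-1 * unit (x j j))) = \1.
  apply: (@cancr _ g); rewrite mul1g -[RHS]idem.
  by rewrite !mulA.
have Z' : e j j j * g = ((unit (tgt g))^-1 * unit (x j j))^-1.
  apply: (@cancr _ ((unit (tgt g))^-1 * unit (x j j))).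
  by rewrite mulVg -Z !mulA.
by rewrite Z' invMg invgK -unitV -unitM tg.
Qed.

Lemma ident_right j (g : G1 G) k (h : G1 G) : ok j -> ok k ->
  (x j j)^-1 * tgt g = src g ->
  e j j j * Defs.comp g (unit (x j j) * g) = g ->
  (x k j)^-1 * tgt h = src g ->
  e k j j * Defs.comp h (unit (x k j) * g) = h.
Proof.
move=> oj ok' tg idem th.
have eg := idemZ _ _ oj tg idem.
rewrite comp_formula; last by rewrite srcM src_unit -th mulKVg.
rewrite ekjj //.
set u := unit (x k j).
set hw := u^-1 * h * (unit (tgt h))^-1 * u.
have thw : tgt hw = \1.
  by rewrite /hw !tgtM !tgtV /u !tgt_unit mulgK mulVg.
have cm := commute_st _ _ (Hs _ _ _ oj oj oj) thw.
transitivity (u * (e j j j * hw) * g).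
  by rewrite /hw !mulA.
rewrite cm /hw -!mulA eg mulKVg /u -unitM -th mulKVg mulVg mulg1 //.
Qed.

Definition Kf i j k l := (unit (x i j))^-1 * ((e i j l)^-1 * e i k l).

Lemma srcK i j k l : ok i -> ok j -> ok k -> ok l -> src (Kf i j k l) = (x i j)^-1.
Proof.
move=> oi oj ok' ol.
by rewrite /Kf !srcM !srcV src_unit !Hs // inv1 mulg1 mulg1.
Qed.

Lemma tgtK i j k l : ok i -> ok j -> ok k -> ok l ->
  tgt (Kf i j k l) = x j l * (x k l)^-1 * (x i k)^-1.
Proof.
move=> oi oj ok' ol.
rewrite /Kf !tgtM !tgtV tgt_unit !tgtE // !invMg !invgK !mulA mulVg mul1g.
by rewrite mulgKV.
Qed.

Lemma Qcomp i j k l p q (g h : G1 G) :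
  ok i -> ok j -> ok k -> ok l -> ok p -> ok q ->
  src h = (x i k)^-1 * tgt g ->
  Kf i j p q * (e i k p * Defs.comp g (unit (x i k) * h)) =
  e j l q * Defs.comp (Kf i j k l * g) (unit (x j l) * (Kf k l p q * h)).
Proof.
move=> oi oj ok' ol op oq sh.
rewrite comp_formula; last by rewrite srcM src_unit sh mulKVg.
rewrite comp_formula; last first.
  by rewrite (tgtM (Kf _ _ _ _)) tgtK // (srcM (unit _)) (srcM (Kf _ _ _ _)) srcK // src_unit sh !mulA.
rewrite (tgtM (Kf _ _ _ _)) tgtK //.
set E' := unit (x i k) * ((e k l q)^-1 * e k p q) * (unit (x i k))^-1.
set W := g * (unit (tgt g))^-1.
have E1 : e i p q * e i k p = e i l q * e i k l * E'.
  rewrite (Hc _ _ _ _ oi ok' op oq).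
  have C2 := Hc _ _ _ _ oi ok' ol oq.
  rewrite (eq_mulVr _ _ _ (esym C2)) !conj2E /E' !invMg !invgK !mulA.
  by rewrite mulgKV.
have E2 : (e i j q)^-1 * e i l q =
    unit (x i j) * e j l q * (unit (x i j))^-1 * (e i j l)^-1.
  have C1 := Hc _ _ _ _ oi oj ol oq.
  by rewrite (eq_mulVr _ _ _ C1) conj2E !mulA mulVg mul1g.
have key : (unit (x i j))^-1 * ((e i j q)^-1 * (e i p q * e i k p)) =
    e j l q * (unit (x i j))^-1 * (e i j l)^-1 * e i k l * E'.
  rewrite E1.
  transitivity ((unit (x i j))^-1 * (((e i j q)^-1 * e i l q) * e i k l * E')).
    by rewrite !mulA.
  by rewrite E2 !mulA mulVg mul1g.
have sE' : src E' = \1.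
  by rewrite /E' !srcM !srcV src_unit !Hs // inv1 !mulg1 mulgV.
have tW : tgt W = \1.
  by rewrite /W tgtM tgtV tgt_unit mulgV.
have cm := commute_st _ _ sE' tW.
transitivity (e j l q * (unit (x i j))^-1 * (e i j l)^-1 * e i k l * (E' * W) * unit (x i k) * h).
  transitivity ((unit (x i j))^-1 * ((e i j q)^-1 * (e i p q * e i k p)) * W * unit (x i k) * h).
    by rewrite /Kf /W !mulA.
  by rewrite key !mulA.
rewrite cm /W /E' /Kf.
rewrite !unitM !unitV !invMg !invgK !mulA.
by rewrite !mulgKV mulgK.
Qed.
End PointCocycle.
End TwoGroupAlg.
Lemma within_cvgE {T U : topologicalType} (A : set T) (f : T -> U) :
  {within A, continuous f} <-> (forall x, A x -> f @ within A (nbhs x) --> f x).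
Proof.
rewrite continuous_subspace_in; split => H x Ax.
  have := H x; rewrite inE => /(_ Ax).
  by rewrite /continuous_at /= (nbhs_subspace_in Ax).
rewrite inE in Ax.
rewrite /continuous_at /=.
have := H x Ax.
by rewrite (nbhs_subspace_in Ax).
Qed.

Section CvgHelpers.
Context {T : Type} {F : set_system T} {FF : Filter F}.

Lemma cvg_fst' {Y Z : topologicalType} (f : T -> Y * Z) (p : Y * Z) :
  f @ F --> p -> (fun z => (f z).1) @ F --> p.1.
Proof. by move=> h; apply: (cvg_comp f fst h); exact: (@cvg_fst Y Z (nbhs p.1) (nbhs p.2) _). Qed.

Lemma cvg_snd' {Y Z : topologicalType} (f : T -> Y * Z) (p : Y * Z) :
  f @ F --> p -> (fun z => (f z).2) @ F --> p.2.
Proof. by move=> h; apply: (cvg_comp f snd h); exact: (@cvg_snd Y Z (nbhs p.1) (nbhs p.2) _). Qed.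

Lemma cvg_pair' {Y Z : topologicalType} (f : T -> Y) (g : T -> Z) (a : Y) (b : Z) :
  f @ F --> a -> g @ F --> b -> (fun z => (f z, g z)) @ F --> (a, b).
Proof. by move=> hf hg; exact: cvg_pair. Qed.

Lemma cvg_disc {I : choiceType} (f : T -> discrete_topology I) (i : discrete_topology I) :
  f @ F --> i -> \forall z \near F, f z = i.
Proof. by move=> h; apply: (h [set i]). Qed.

Lemma cvg_contc {Y Z : topologicalType} (h : Y -> Z) (f : T -> Y) (a : Y) :
  continuous h -> f @ F --> a -> (fun z => h (f z)) @ F --> h a.
Proof. by move=> hc hf; apply: (cvg_comp f h hf); exact: hc. Qed.

Lemma cvg_mulT (Gp : topGroup) (f g : T -> Gp) (a b : Gp) :
  f @ F --> a -> g @ F --> b -> (fun z => tg_mul (f z) (g z)) @ F --> tg_mul a b.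
Proof.
move=> hf hg.
have := cvg_contc (fun p : Gp * Gp => tg_mul p.1 p.2) _ _ (@tg_mul_cont Gp) (cvg_pair' _ _ _ _ hf hg).
by [].
Qed.

Lemma cvg_invT (Gp : topGroup) (f : T -> Gp) (a : Gp) :
  f @ F --> a -> (fun z => tg_inv (f z)) @ F --> tg_inv a.
Proof. by move=> hf; exact: (cvg_contc _ _ _ (@tg_inv_cont Gp) hf). Qed.

Lemma cvg_within_comp {Y Z : topologicalType} (S : set Y) (f : Y -> Z) (q : T -> Y) (y : Y) :
  {within S, continuous f} -> S y -> q @ F --> y ->
  (\forall z \near F, S (q z)) -> (fun z => f (q z)) @ F --> f y.
Proof.
move=> /within_cvgE fc Sy qc ev.
apply: (cvg_comp q f _ (fc y Sy)).
move=> P nP.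
have := qc _ nP => nP'.
by apply: filterS2 ev nP' => z Sz; apply.
Qed.

Lemma cvg_near_eq {Y : topologicalType} (f g : T -> Y) (l : Y) :
  (\forall z \near F, f z = g z) -> g @ F --> l -> f @ F --> l.
Proof.
move=> e hg; apply: cvg_trans hg.
by apply: near_eq_cvg; apply: filterS e => z ->.
Qed.
End CvgHelpers.
Arguments cvg_fst' {T F Y Z f p}.
Arguments cvg_snd' {T F Y Z f p}.
Arguments cvg_pair' {T F FF Y Z f g a b}.
Arguments cvg_disc {T F I f i}.
Arguments cvg_mulT {T F FF Gp f g a b}.
Arguments cvg_invT {T F Gp f a}.

Lemma cvg_within_cont {T Y : topologicalType} (S : set T) (h : T -> Y) z0 :
  continuous h -> h @ within S (nbhs z0) --> h z0.
Proof.
move=> hc; apply: cvg_trans (hc z0); apply: cvg_app; exact: cvg_within.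
Qed.

Section Generic.
Variables (G : twoGroup) (X : topologicalType).

Lemma idem_identity (J : choiceType) (W : J -> set X)
    (x : J -> J -> X -> G0 G) (e : J -> J -> J -> X -> G1 G) :
  (forall v i j k, W i v -> W j v -> W k v -> src (e i j k v) = \1) ->
  (forall v i j k, W i v -> W j v -> W k v ->
     tgt (e i j k v) * x i j v * x j k v = x i k v) ->
  (forall v i j k l, W i v -> W j v -> W k v -> W l v ->
     e i k l v * e i j k v = e i j l v * conj2 (x i j v) (e j k l v)) ->
  forall n : Mor G X J, mor_set W n -> btgt x n = bsrc n -> bcomp x e n n = n ->
  is_identity W x e n.
Proof.
move=> Hs Ht Hc [[[j j'] v] g] [Wj Wj'] /= tb.
case: tb => ej' tg; subst j'.
move=> idem; case: idem => idem.
split => //.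
- by rewrite /= tg.
- move=> [[[k1 k] v''] h] [W1 W2] /= eq.
  case: eq => ek1 ev sh; subst k1 v''.
  congr (_, _).
  exact: (@ident_left G J (fun i => W i v) (fun i j => x i j v) (fun i j k => e i j k v) (Hs v) (Ht v) (Hc v)).
- move=> [[[k k1] v''] h] [W1 W2] /= eq.
  case: eq => ek1 ev th; subst k1 v''.
  congr (_, _).
  exact: (@ident_right G J (fun i => W i v) (fun i j => x i j v) (fun i j k => e i j k v) (Hs v) (Hc v)).
Qed.
End Generic.

Section Main.
Variables (G : twoGroup) (X : topologicalType) (I A : choiceType)
    (U : I -> set X) (V : A -> set X)
    (xc : I -> I -> X -> G0 G) (ec : I -> I -> I -> X -> G1 G)
    (xd : A -> A -> X -> G0 G) (ed : A -> A -> A -> X -> G1 G).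
Hypothesis hc : cocycle U xc ec.
Variables (F0 : Obj G X A -> Obj G X I) (F1 : Mor G X A -> Mor G X I).
Hypothesis hF : bundle_morphism V xd ed U xc ec F0 F1.
Variable alpha : A -> I.
Hypothesis Halpha : forall a, V a `<=` U (alpha a).

Lemma cUs v i j k : U i v -> U j v -> U k v -> src (ec i j k v) = \1.
Proof. by case: hc => _ _ hs _ _ ui uj uk; apply: hs; split; first split. Qed.
Lemma cUt v i j k : U i v -> U j v -> U k v ->
  tgt (ec i j k v) * xc i j v * xc j k v = xc i k v.
Proof. by case: hc => _ _ _ ht _ ui uj uk; apply: ht; split; first split. Qed.
Lemma cUc v i j k l : U i v -> U j v -> U k v -> U l v ->
  ec i k l v * ec i j k v = ec i j l v * conj2 (xc i j v) (ec j k l v).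
Proof. by case: hc => _ _ _ _ h4 ui uj uk ul; apply: h4; split; first split; first split. Qed.

Lemma F0obj o : obj_set V o -> obj_set U (F0 o).
Proof. have [h1 [h2 [h3 [h4 [h5 [h6 [h7 [h8 [h9 [h10 h11]]]]]]]]]] := hF; exact: h1. Qed.
Lemma F1mor m : mor_set V m -> mor_set U (F1 m).
Proof. have [h1 [h2 [h3 [h4 [h5 [h6 [h7 [h8 [h9 [h10 h11]]]]]]]]]] := hF; exact: h2. Qed.
Lemma F0cont : {within obj_set V, continuous F0}.
Proof. have [h1 [h2 [h3 [h4 [h5 [h6 [h7 [h8 [h9 [h10 h11]]]]]]]]]] := hF; exact: h3. Qed.
Lemma F1cont : {within mor_set V, continuous F1}.
Proof. have [h1 [h2 [h3 [h4 [h5 [h6 [h7 [h8 [h9 [h10 h11]]]]]]]]]] := hF; exact: h4. Qed.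
Lemma F1st m : mor_set V m ->
  bsrc (F1 m) = F0 (bsrc m) /\ btgt xc (F1 m) = F0 (btgt xd m).
Proof. have [h1 [h2 [h3 [h4 [h5 [h6 [h7 [h8 [h9 [h10 h11]]]]]]]]]] := hF; exact: h5. Qed.
Lemma F1comp m m' : mor_set V m -> mor_set V m' -> btgt xd m = bsrc m' ->
  F1 (bcomp xd ed m m') = bcomp xc ec (F1 m) (F1 m').
Proof. have [h1 [h2 [h3 [h4 [h5 [h6 [h7 [h8 [h9 [h10 h11]]]]]]]]]] := hF; exact: h6. Qed.
Lemma F0act o y : obj_set V o -> F0 (bact_obj o y) = bact_obj (F0 o) y.
Proof. have [h1 [h2 [h3 [h4 [h5 [h6 [h7 [h8 [h9 [h10 h11]]]]]]]]]] := hF; exact: h8. Qed.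
Lemma F1act m h : mor_set V m -> F1 (bact_mor m h) = bact_mor (F1 m) h.
Proof. have [h1 [h2 [h3 [h4 [h5 [h6 [h7 [h8 [h9 [h10 h11]]]]]]]]]] := hF; exact: h9. Qed.
Lemma F0pr o : obj_set V o -> bproj_obj (F0 o) = bproj_obj o.
Proof. have [h1 [h2 [h3 [h4 [h5 [h6 [h7 [h8 [h9 [h10 h11]]]]]]]]]] := hF; exact: h10. Qed.
Lemma F1pr m : mor_set V m -> bproj_mor (F1 m) = bproj_mor m.
Proof. have [h1 [h2 [h3 [h4 [h5 [h6 [h7 [h8 [h9 [h10 h11]]]]]]]]]] := hF; exact: h11. Qed.

Definition idx (a : A) (u : X) : I := (F0 (((a, u), \1) : Obj G X A)).1.1.

Lemma F0E o : obj_set V o -> F0 o = ((idx o.1.1 o.1.2, o.1.2), (F0 o).2).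
Proof.
case: o => [[a u] w] /= Vau.
have e1 : (((a, u), w) : Obj G X A) = bact_obj ((a, u), \1) w.
  by rewrite /bact_obj /= mul1g.
rewrite e1 F0act //.
have p := F0pr (((a, u), \1) : Obj G X A) Vau.
rewrite /idx; move: p; rewrite /bproj_obj /=.
by case: (F0 _) => [[i u'] y] /= ->.
Qed.

Lemma idxU a u : V a u -> U (idx a u) u.
Proof.
move=> Vau.
have h := F0obj (((a, u), \1) : Obj G X A) Vau.
have p := F0pr (((a, u), \1) : Obj G X A) Vau.
move: h p; rewrite /idx /obj_set /bproj_obj /=.
by case: (F0 _) => [[i u'] y] /= h <-.
Qed.

Lemma F1E m : mor_set V m ->
  F1 m = (((idx m.1.1.1 m.1.2, idx m.1.1.2 m.1.2), m.1.2), (F1 m).2).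
Proof.
case: m => [[[a b] v] g] /= [Va Vb].
have [hs ht] := F1st (((a, b), v), g) (conj Va Vb).
move: hs ht.
rewrite (F0E (bsrc _)); last exact: Va.
rewrite (F0E (btgt _ _)); last exact: Vb.
rewrite /=.
by case: (F1 _) => [[[i j] v'] h] /= [-> -> _] [-> _].
Qed.


Notation xr := (restr_x alpha xc).
Notation er := (restr_e alpha ec).

Definition Kab (a b : A) (j l : I) (v : X) : G1 G :=
  Kf G I (fun i j => xc i j v) (fun i j k => ec i j k v) (alpha a) j (alpha b) l.

Definition Q0 (o : Obj G X A) : Obj G X I :=
  ((idx o.1.1 o.1.2, o.1.2), (xc (alpha o.1.1) (idx o.1.1 o.1.2) o.1.2)^-1 * o.2).
Definition Q1 (m : Mor G X A) : Mor G X I :=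
  (((idx m.1.1.1 m.1.2, idx m.1.1.2 m.1.2), m.1.2),
   Kab m.1.1.1 m.1.1.2 (idx m.1.1.1 m.1.2) (idx m.1.1.2 m.1.2) m.1.2 * m.2).

Lemma srcKab a b v : V a v -> V b v ->
  src (Kab a b (idx a v) (idx b v) v) = (xc (alpha a) (idx a v) v)^-1.
Proof.
move=> Va Vb.
exact: (@srcK G I (fun i => U i v) (fun i j => xc i j v) (fun i j k => ec i j k v)
  (@cUs v) _ _ _ _ (Halpha _ _ Va) (idxU _ _ Va) (Halpha _ _ Vb) (idxU _ _ Vb)).
Qed.

Lemma tgtKab a b v : V a v -> V b v ->
  tgt (Kab a b (idx a v) (idx b v) v) =
  xc (idx a v) (idx b v) v * (xc (alpha b) (idx b v) v)^-1 * (xc (alpha a) (alpha b) v)^-1.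
Proof.
move=> Va Vb.
exact: (@tgtK G I (fun i => U i v) (fun i j => xc i j v) (fun i j k => ec i j k v)
  (@cUt v) _ _ _ _ (Halpha _ _ Va) (idxU _ _ Va) (Halpha _ _ Vb) (idxU _ _ Vb)).
Qed.

Lemma Q_obj o : obj_set V o -> obj_set U (Q0 o).
Proof. by case: o => [[a u] w] /= Vau; exact: idxU. Qed.

Lemma Q_mor m : mor_set V m -> mor_set U (Q1 m).
Proof. by case: m => [[[a b] v] g] /= [Va Vb]; split; exact: idxU. Qed.

Lemma Q_st m : mor_set V m ->
  bsrc (Q1 m) = Q0 (bsrc m) /\ btgt xc (Q1 m) = Q0 (btgt xr m).
Proof.
case: m => [[[a b] v] g] [Va Vb] /=.
split; congr (_, _).
  by rewrite (srcM _ (Kab _ _ _ _ _)) srcKab.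
rewrite (tgtM _ (Kab _ _ _ _ _)) tgtKab // /restr_x.
by rewrite !mulA mulVg mul1g.
Qed.

Lemma Q_comp m m' : mor_set V m -> mor_set V m' -> btgt xr m = bsrc m' ->
  Q1 (bcomp xr er m m') = bcomp xc ec (Q1 m) (Q1 m').
Proof.
case: m => [[[a b] v] g] [Va Vb]; case: m' => [[[b' c] v'] h] [Vb' Vc] /= eq.
case: eq => eb ev sh; subst b' v'.
rewrite /=; congr (_, _).
rewrite /restr_e /restr_x /Kab.
exact: (@Qcomp G I (fun i => U i v) (fun i j => xc i j v) (fun i j k => ec i j k v)
  (@cUs v) (@cUt v) (@cUc v) _ _ _ _ _ _ g h (Halpha _ _ Va) (idxU _ _ Va) (Halpha _ _ Vb) (idxU _ _ Vb)
  (Halpha _ _ Vc) (idxU _ _ Vc) (esym sh)).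
Qed.

Lemma Q_id m : is_identity V xr er m -> is_identity U xc ec (Q1 m).
Proof.
move=> [ms tb lft _].
have idem : bcomp xr er m m = m := lft m ms (esym tb).
apply: (@idem_identity G X I U xc ec cUs cUt cUc).
- exact: Q_mor.
- by have [h1 h2] := Q_st _ ms; rewrite h2 tb -h1.
- by rewrite -Q_comp // idem.
Qed.

Lemma Q0act o y : Q0 (bact_obj o y) = bact_obj (Q0 o) y.
Proof. by rewrite /Q0 /bact_obj /= mulA. Qed.
Lemma Q1act m h : Q1 (bact_mor m h) = bact_mor (Q1 m) h.
Proof. by rewrite /Q1 /bact_mor /= mulA. Qed.


Definition P0 (o : Obj G X A) : Obj G X A :=
  (o.1, xc (alpha o.1.1) (F0 o).1.1 o.1.2 * (F0 o).2).
Definition P1 (m : Mor G X A) : Mor G X A :=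
  (m.1, (Kab m.1.1.1 m.1.1.2 (F1 m).1.1.1 (F1 m).1.1.2 m.1.2)^-1 * (F1 m).2).

Lemma FQ0 o : obj_set V o -> Q0 (P0 o) = F0 o.
Proof.
move=> Vo; have e := F0E _ Vo.
have e1 : (F0 o).1.1 = idx o.1.1 o.1.2 by rewrite e.
by rewrite /Q0 /P0 /= e1 mulKg [in RHS]e.
Qed.

Lemma FQ1 m : mor_set V m -> Q1 (P1 m) = F1 m.
Proof.
move=> Vm; have e := F1E _ Vm.
have e1 : (F1 m).1.1.1 = idx m.1.1.1 m.1.2 by rewrite e.
have e2 : (F1 m).1.1.2 = idx m.1.1.2 m.1.2 by rewrite e.
by rewrite /Q1 /P1 /= e1 e2 mulKVg [in RHS]e.
Qed.

Lemma Q0inj o1 o2 : o1.1 = o2.1 -> Q0 o1 = Q0 o2 -> o1 = o2.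
Proof.
case: o1 => [o1 w1]; case: o2 => [o2 w2] /= e; subst o2.
by rewrite /Q0 /= => -[] /cancl ->.
Qed.

Lemma Q1inj m1 m2 : m1.1 = m2.1 -> Q1 m1 = Q1 m2 -> m1 = m2.
Proof.
case: m1 => [m1 w1]; case: m2 => [m2 w2] /= e; subst m2.
by rewrite /Q1 /= => -[] /cancl ->.
Qed.

Lemma P_obj o : obj_set V o -> obj_set V (P0 o).
Proof. by []. Qed.
Lemma P_mor m : mor_set V m -> mor_set V (P1 m).
Proof. by []. Qed.

Lemma P_st m : mor_set V m ->
  bsrc (P1 m) = P0 (bsrc m) /\ btgt xr (P1 m) = P0 (btgt xd m).
Proof.
move=> ms.
have [fs ft] := F1st _ ms.
have [qs qt] := Q_st _ (P_mor _ ms).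
case: m ms fs ft qs qt => [[[a b] v] g] [Va Vb] fs ft qs qt.
split; apply: Q0inj => //.
  by rewrite -qs FQ1 // fs FQ0.
by rewrite -qt FQ1 // ft FQ0.
Qed.

Lemma P_comp m m' : mor_set V m -> mor_set V m' -> btgt xd m = bsrc m' ->
  P1 (bcomp xd ed m m') = bcomp xr er (P1 m) (P1 m').
Proof.
case: m => [[[a b] v] g]; case: m' => [[[b' c] v'] h] ms ms' tb.
have [_ pt] := P_st _ ms.
have [ps' _] := P_st _ ms'.
have tb' : btgt xr (P1 (((a, b), v), g)) = bsrc (P1 (((b', c), v'), h)).
  by rewrite pt ps' tb.
have msc : mor_set V (bcomp xd ed (((a, b), v), g) (((b', c), v'), h)).
  move: ms ms' tb => [Va Vb] [Vb' Vc] /= [_ ev _]; subst v'; by split.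
apply: Q1inj => //.
by rewrite FQ1 // F1comp // -(FQ1 _ ms) -(FQ1 _ ms') Q_comp.
Qed.

Lemma cVs v a b c : V a v -> V b v -> V c v -> src (er a b c v) = \1.
Proof. by move=> Va Vb Vc; apply: cUs; apply: Halpha. Qed.
Lemma cVt v a b c : V a v -> V b v -> V c v ->
  tgt (er a b c v) * xr a b v * xr b c v = xr a c v.
Proof. by move=> Va Vb Vc; apply: cUt; apply: Halpha. Qed.
Lemma cVc v a b c d : V a v -> V b v -> V c v -> V d v ->
  er a c d v * er a b c v = er a b d v * conj2 (xr a b v) (er b c d v).
Proof. by move=> Va Vb Vc Vd; apply: cUc; apply: Halpha. Qed.

Lemma P_id m : is_identity V xd ed m -> is_identity V xr er (P1 m).
Proof.
move=> [ms tb lft _].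
have idem : bcomp xd ed m m = m := lft m ms (esym tb).
apply: (@idem_identity G X A V xr er cVs cVt cVc).
- exact: P_mor.
- by have [h1 h2] := P_st _ ms; rewrite h2 tb -h1.
- by rewrite -P_comp // idem.
Qed.

Lemma P0act o y : obj_set V o -> P0 (bact_obj o y) = bact_obj (P0 o) y.
Proof.
move=> Vo; apply: Q0inj => //.
by rewrite FQ0 // F0act // -FQ0 // Q0act.
Qed.

Lemma P1act m h : mor_set V m -> P1 (bact_mor m h) = bact_mor (P1 m) h.
Proof.
move=> Vm; apply: Q1inj => //.
by rewrite FQ1 // F1act // -FQ1 // Q1act.
Qed.


Lemma xc_cont i j : {within U i `&` U j, continuous (xc i j)}.
Proof. by case: hc => h _ _ _ _; exact: h. Qed.
Lemma ec_cont i j k : {within U i `&` U j `&` U k, continuous (ec i j k)}.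
Proof. by case: hc => _ h _ _ _; exact: h. Qed.

Lemma idx_near {T : Type} {F : set_system T} {FF : Filter F} (p : T -> A) (q : T -> X)
    a0 u0 : V a0 u0 -> (\forall z \near F, p z = a0) -> q @ F --> u0 ->
  (\forall z \near F, V (p z) (q z)) -> \forall z \near F, idx (p z) (q z) = idx a0 u0.
Proof.
move=> V0 hp hq hV.
pose r := fun z => (((p z, q z), \1) : Obj G X A).
have cr : r @ F --> (((a0, u0), \1) : Obj G X A).
  apply: (cvg_near_eq _ (fun z => (((a0 : discrete_topology A), q z), \1))).
    by apply: filterS hp => z e; rewrite /r e.
  apply: cvg_pair'; last exact: cvg_cst.
  by apply: cvg_pair' hq; exact: cvg_cst.
have cF : (fun z => F0 (r z)) @ F --> F0 (((a0, u0), \1) : Obj G X A).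
  by apply: (cvg_within_comp (obj_set V) _ _ _ F0cont _ cr).
have := cvg_disc (cvg_fst' (cvg_fst' cF)).
by [].
Qed.

Lemma Kab_cvg {T : Type} {F : set_system T} {FF : Filter F} (q : T -> X) v0 a0 b0 j0 l0 :
  q @ F --> v0 -> U (alpha a0) v0 -> U j0 v0 -> U (alpha b0) v0 -> U l0 v0 ->
  (\forall z \near F, [/\ U (alpha a0) (q z), U j0 (q z), U (alpha b0) (q z) & U l0 (q z)]) ->
  (fun z => Kab a0 b0 j0 l0 (q z)) @ F --> Kab a0 b0 j0 l0 v0.
Proof.
move=> hq u1 u2 u3 u4 ev.
rewrite /Kab /Kf.
apply: cvg_mulT.
  apply: cvg_invT; apply: (cvg_contc _ _ _ (@unit_cont G)).
  apply: (cvg_within_comp (U (alpha a0) `&` U j0) _ _ _ (xc_cont _ _) _ hq _) => //.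
  by apply: filterS ev => z [].
apply: cvg_mulT.
  apply: cvg_invT.
  apply: (cvg_within_comp (U (alpha a0) `&` U j0 `&` U l0) _ _ _ (ec_cont _ _ _) _ hq _) => //.
  by apply: filterS ev => z [].
apply: (cvg_within_comp (U (alpha a0) `&` U (alpha b0) `&` U l0) _ _ _ (ec_cont _ _ _) _ hq _) => //.
by apply: filterS ev => z [].
Qed.

Lemma Q0cont : {within obj_set V, continuous Q0}.
Proof.
apply/within_cvgE => -[[a0 u0] w0] V0.
set F := within (obj_set V) (nbhs (((a0, u0), w0) : Obj G X A)).
have cz : (fun z => z) @ F --> (((a0, u0), w0) : Obj G X A) by apply: cvg_within.
have c1 := cvg_fst' (cvg_fst' cz).
have ha : \forall z \near F, z.1.1 = a0 := cvg_disc c1.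
have c2 := cvg_snd' (cvg_fst' cz).
have c3 := cvg_snd' cz.
have hV : \forall z \near F, obj_set V z by apply: near_withinT.
have hi : \forall z \near F, idx z.1.1 z.1.2 = idx a0 u0.
  exact: (idx_near (fun z : Obj G X A => z.1.1) (fun z : Obj G X A => z.1.2) _ _ V0 ha c2 hV).
apply: (cvg_near_eq _ (fun z : Obj G X A =>
  (((idx a0 u0 : discrete_topology I), z.1.2), (xc (alpha a0) (idx a0 u0) z.1.2)^-1 * z.2))).
  by apply: filterS2 ha hi => z e1 e2; rewrite /Q0 e2 e1.
apply: cvg_pair'.
  by apply: cvg_pair' c2; exact: cvg_cst.
apply: cvg_mulT c3; apply: cvg_invT.
apply: (cvg_within_comp (U (alpha a0) `&` U (idx a0 u0)) _ _ _ (xc_cont _ _) _ c2 _).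
  by split; [exact: Halpha | exact: idxU].
apply: filterS3 ha hi hV => z e1 e2 Vz.
split; last by rewrite -e2; exact: idxU.
by apply: Halpha; rewrite -e1.
Qed.


Lemma Q1cont : {within mor_set V, continuous Q1}.
Proof.
apply/within_cvgE => -[[[a0 b0] v0] g0] [Va0 Vb0].
set F := within (mor_set V) (nbhs ((((a0, b0), v0), g0) : Mor G X A)).
have cz : (fun z => z) @ F --> ((((a0, b0), v0), g0) : Mor G X A) by apply: cvg_within.
have ca := cvg_fst' (cvg_fst' (cvg_fst' cz)).
have cb := cvg_snd' (cvg_fst' (cvg_fst' cz)).
have cv := cvg_snd' (cvg_fst' cz).
have cg := cvg_snd' cz.
have ha : \forall z \near F, z.1.1.1 = a0 := cvg_disc ca.
have hb : \forall z \near F, z.1.1.2 = b0 := cvg_disc cb.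
have hV : \forall z \near F, mor_set V z by apply: near_withinT.
have hVa : \forall z \near F, V z.1.1.1 z.1.2 by apply: filterS hV => z [].
have hVb : \forall z \near F, V z.1.1.2 z.1.2 by apply: filterS hV => z [].
have hia := idx_near (fun z : Mor G X A => z.1.1.1) (fun z : Mor G X A => z.1.2) _ _ Va0 ha cv hVa.
have hib := idx_near (fun z : Mor G X A => z.1.1.2) (fun z : Mor G X A => z.1.2) _ _ Vb0 hb cv hVb.
apply: (cvg_near_eq _ (fun z : Mor G X A =>
  ((((idx a0 v0 : discrete_topology I), (idx b0 v0 : discrete_topology I)), z.1.2),
   Kab a0 b0 (idx a0 v0) (idx b0 v0) z.1.2 * z.2))).
  near=> z.
  have e1 : idx z.1.1.1 z.1.2 = idx a0 v0 by near: z; exact: hia.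
  have e2 : idx z.1.1.2 z.1.2 = idx b0 v0 by near: z; exact: hib.
  have e3 : z.1.1.1 = a0 by near: z; exact: ha.
  have e4 : z.1.1.2 = b0 by near: z; exact: hb.
  by rewrite /Q1 e1 e2 e3 e4.
apply: cvg_pair'.
  by apply: cvg_pair' cv; exact: cvg_cst.
apply: cvg_mulT cg.
apply: (Kab_cvg (fun z : Mor G X A => z.1.2)) cv (Halpha _ _ Va0) (idxU _ _ Va0)
  (Halpha _ _ Vb0) (idxU _ _ Vb0) _.
near=> z.
have za : z.1.1.1 = a0 by near: z; exact: ha.
have zb : z.1.1.2 = b0 by near: z; exact: hb.
have Vz : V z.1.1.1 z.1.2 by near: z; exact: hVa.
have Vz' : V z.1.1.2 z.1.2 by near: z; exact: hVb.
have e1 : idx z.1.1.1 z.1.2 = idx a0 v0 by near: z; exact: hia.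
have e2 : idx z.1.1.2 z.1.2 = idx b0 v0 by near: z; exact: hib.
split.
- by apply: Halpha; rewrite -za.
- by rewrite -e1; exact: idxU.
- by apply: Halpha; rewrite -zb.
- by rewrite -e2; exact: idxU.
Unshelve. all: by end_near.
Qed.

Lemma P0cont : {within obj_set V, continuous P0}.
Proof.
apply/within_cvgE => -[[a0 u0] w0] V0.
set F := within (obj_set V) (nbhs (((a0, u0), w0) : Obj G X A)).
have cz : (fun z => z) @ F --> (((a0, u0), w0) : Obj G X A) by apply: cvg_within.
have ha : \forall z \near F, z.1.1 = a0 := cvg_disc (cvg_fst' (cvg_fst' cz)).
have cv := cvg_snd' (cvg_fst' cz).
have hV : \forall z \near F, obj_set V z by apply: near_withinT.
have cF := (within_cvgE _ _).1 F0cont _ V0.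
have hj : \forall z \near F, (F0 z).1.1 = (F0 (((a0, u0), w0) : Obj G X A)).1.1 :=
  cvg_disc (cvg_fst' (cvg_fst' cF)).
have cF2 := cvg_snd' cF.
have ej0 : (F0 (((a0, u0), w0) : Obj G X A)).1.1 = idx a0 u0 by rewrite {1}(F0E _ V0).
apply: (cvg_near_eq _ (fun z : Obj G X A =>
  (z.1, xc (alpha a0) (F0 (((a0, u0), w0) : Obj G X A)).1.1 z.1.2 * (F0 z).2))).
  near=> z.
  have e1 : (F0 z).1.1 = (F0 (((a0, u0), w0) : Obj G X A)).1.1 by near: z; exact: hj.
  have e2 : z.1.1 = a0 by near: z; exact: ha.
  by rewrite /P0 e1 e2.
apply: cvg_pair' (cvg_fst' cz) _.
apply: cvg_mulT cF2.
apply: (cvg_within_comp (U (alpha a0) `&` U (F0 (((a0, u0), w0) : Obj G X A)).1.1)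
   _ _ _ (xc_cont _ _) _ cv _).
  by split; [exact: Halpha | rewrite ej0; exact: idxU].
near=> z.
have za : z.1.1 = a0 by near: z; exact: ha.
have Vz : obj_set V z by near: z; exact: hV.
have zj : (F0 z).1.1 = (F0 (((a0, u0), w0) : Obj G X A)).1.1 by near: z; exact: hj.
split; first by apply: Halpha; rewrite -za.
rewrite -zj.
have -> : (F0 z).1.1 = idx z.1.1 z.1.2 by rewrite {1}(F0E _ Vz).
exact: idxU.
Unshelve. all: by end_near.
Qed.

Lemma P1cont : {within mor_set V, continuous P1}.
Proof.
apply/within_cvgE => -[[[a0 b0] v0] g0] Vm0.
have [Va0 Vb0] := Vm0.
set m0 := ((((a0, b0), v0), g0) : Mor G X A).
set F := within (mor_set V) (nbhs m0).
have cz : (fun z => z) @ F --> m0 by apply: cvg_within.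
have ha : \forall z \near F, z.1.1.1 = a0 := cvg_disc (cvg_fst' (cvg_fst' (cvg_fst' cz))).
have hb : \forall z \near F, z.1.1.2 = b0 := cvg_disc (cvg_snd' (cvg_fst' (cvg_fst' cz))).
have cv := cvg_snd' (cvg_fst' cz).
have hV : \forall z \near F, mor_set V z by apply: near_withinT.
have cF := (within_cvgE _ _).1 F1cont _ Vm0.
have hj : \forall z \near F, (F1 z).1.1.1 = (F1 m0).1.1.1 :=
  cvg_disc (cvg_fst' (cvg_fst' (cvg_fst' cF))).
have hl : \forall z \near F, (F1 z).1.1.2 = (F1 m0).1.1.2 :=
  cvg_disc (cvg_snd' (cvg_fst' (cvg_fst' cF))).
have cF2 := cvg_snd' cF.
have ej0 : (F1 m0).1.1.1 = idx a0 v0 by rewrite {1}(F1E _ Vm0).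
have el0 : (F1 m0).1.1.2 = idx b0 v0 by rewrite {1}(F1E _ Vm0).
apply: (cvg_near_eq _ (fun z : Mor G X A =>
  (z.1, (Kab a0 b0 (F1 m0).1.1.1 (F1 m0).1.1.2 z.1.2)^-1 * (F1 z).2))).
  near=> z.
  have e1 : (F1 z).1.1.1 = (F1 m0).1.1.1 by near: z; exact: hj.
  have e2 : (F1 z).1.1.2 = (F1 m0).1.1.2 by near: z; exact: hl.
  have e3 : z.1.1.1 = a0 by near: z; exact: ha.
  have e4 : z.1.1.2 = b0 by near: z; exact: hb.
  by rewrite /P1 e1 e2 e3 e4.
apply: cvg_pair' (cvg_fst' cz) _.
apply: cvg_mulT cF2.
apply: cvg_invT.
apply: (Kab_cvg (fun z : Mor G X A => z.1.2)) cv (Halpha _ _ Va0) _ (Halpha _ _ Vb0) _ _.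
- by rewrite ej0; exact: idxU.
- by rewrite el0; exact: idxU.
near=> z.
have za : z.1.1.1 = a0 by near: z; exact: ha.
have zb : z.1.1.2 = b0 by near: z; exact: hb.
have Vz : mor_set V z by near: z; exact: hV.
have zj : (F1 z).1.1.1 = (F1 m0).1.1.1 by near: z; exact: hj.
have zl : (F1 z).1.1.2 = (F1 m0).1.1.2 by near: z; exact: hl.
have [Vza Vzb] := Vz.
have e1 : (F1 z).1.1.1 = idx z.1.1.1 z.1.2 by rewrite {1}(F1E _ Vz).
have e2 : (F1 z).1.1.2 = idx z.1.1.2 z.1.2 by rewrite {1}(F1E _ Vz).
split.
- by apply: Halpha; rewrite -za.
- by rewrite -zj e1; exact: idxU.
- by apply: Halpha; rewrite -zb.
- by rewrite -zl e2; exact: idxU.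
Unshelve. all: by end_near.
Qed.

Lemma Q_bm : bundle_morphism V xr er U xc ec Q0 Q1.
Proof.
split; first exact: Q_obj.
split; first exact: Q_mor.
split; first exact: Q0cont.
split; first exact: Q1cont.
split; first exact: Q_st.
split; first exact: Q_comp.
split; first exact: Q_id.
split; first by move=> o y _; exact: Q0act.
split; first by move=> m h _; exact: Q1act.
by split.
Qed.

Lemma P_bm : bundle_morphism V xd ed V xr er P0 P1.
Proof.
split; first exact: P_obj.
split; first exact: P_mor.
split; first exact: P0cont.
split; first exact: P1cont.
split; first exact: P_st.
split; first exact: P_comp.
split; first exact: P_id.
split; first exact: P0act.
split; first exact: P1act.
by split.
Qed.

End Main.

Close Scope tg_scope.

Theorem lemma8 (G : twoGroup) (X : topologicalType) (I A : choiceType)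
    (U : I -> set X) (V : A -> set X)
    (xc : I -> I -> X -> G0 G) (ec : I -> I -> I -> X -> G1 G)
    (xd : A -> A -> X -> G0 G) (ed : A -> A -> A -> X -> G1 G)
    (hU : open_cover U) (hV : open_cover V) (hVU : refines V U)
    (hc : cocycle U xc ec) (hd : cocycle V xd ed)
    (F0 : Obj G X A -> Obj G X I) (F1 : Mor G X A -> Mor G X I)
    (hF : bundle_morphism V xd ed U xc ec F0 F1) :
  exists alpha : A -> I, (forall a, V a `<=` U (alpha a)) /\
  exists (P0 : Obj G X A -> Obj G X A) (P1 : Mor G X A -> Mor G X A)
         (Q0 : Obj G X A -> Obj G X I) (Q1 : Mor G X A -> Mor G X I),
    [/\ bundle_morphism V xd ed V (restr_x alpha xc) (restr_e alpha ec) P0 P1,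
        bundle_morphism V (restr_x alpha xc) (restr_e alpha ec) U xc ec Q0 Q1,
        (forall o, obj_set V o -> F0 o = Q0 (P0 o)) &
        (forall m, mor_set V m -> F1 m = Q1 (P1 m))].
Proof.
have [alpha Halpha] := choice hVU.
exists alpha; split => //.
do 4 eexists; split.
- exact: (P_bm _ _ _ _ _ _ _ _ _ _ hc _ _ hF _ Halpha).
- exact: (Q_bm _ _ _ _ _ _ _ _ _ _ hc _ _ hF _ Halpha).
- by move=> o Vo; rewrite (FQ0 _ _ _ _ _ _ _ _ _ _ _ _ hF _ _ Vo).
- by move=> m Vm; rewrite (FQ1 _ _ _ _ _ _ _ _ _ _ _ _ hF _ _ Vm).
Qed.
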